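(* Let $N,s\in\mathbb{N}$ with $N>2$ and $1\le s<N$, and let $t\in\mathbb{R}$ with $0<t<s$. Then there exist unique $\lambda=\lambda(s,t)\in\left[\frac{\pi}{2}-\frac{\pi}{2N}s,\frac{\pi}{2}\right)$ and $C=C(s,t)\in(0,\pi)$ such that $$\delta(\lambda,C)\equiv\frac{\pi}{N}s\quad\text{and}\quad\beta(\lambda,C)\equiv-\frac{\pi}{N}t.$$ Furthermore: (i) $\lambda(s,\frac{s}{2})=\frac{\pi}{2}-\frac{\pi}{2N}s$ and $C(s,\frac{s}{2})=\frac{\pi}{2}$; (ii) for fixed $s$, $\lambda(s,-)$ is two-to-one on $(0,s)$, with $\lambda(s,s-t)=\lambda(s,t)$; (iii) for fixed $s$, $C(s,-)$ is bijective on $(0,s)$, with $C(s,s-t)=\pi-C(s,t)$.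
   Context: $\equiv$ denotes equality modulo $2\pi$. For $\lambda\in[0,\frac{\pi}{2})$ and $\varphi\in\mathbb{R}$ define (modulo $2\pi$) $\beta(\lambda,\varphi)=\varphi-2\arctan\left(\frac{\cos\frac{\lambda}{2}\sin\varphi}{\sin\frac{\lambda}{2}+\cos\frac{\lambda}{2}\cos\varphi}\right)$ and $\delta(\lambda,\varphi)=\beta(\lambda,\varphi+\pi)-\beta(\lambda,\varphi)\equiv\pi-2\arctan(\sin\varphi\tan\lambda)$. *)

(* Defs.v *)
From Stdlib Require Import Reals ZArith.
Open Scope R_scope.

Definition cong2pi (a b : R) : Prop := exists k : Z, a - b = 2 * PI * IZR k.

(* When the denominator vanishes the arctan argument is ±∞, so 2 arctan(..) = ±π ≡ π;
   we take the value φ - π there (only the class mod 2π matters). *)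
Definition beta (l phi : R) : R :=
  let den := sin (l / 2) + cos (l / 2) * cos phi in
  if Req_EM_T den 0 then phi - PI
  else phi - 2 * atan (cos (l / 2) * sin phi / den).

Definition delta (l phi : R) : R := beta l (phi + PI) - beta l phi.

Definition lamC_spec (N s : nat) (t l C : R) : Prop :=
  PI / 2 - PI / (2 * INR N) * INR s <= l < PI / 2 /\
  0 < C < PI /\
  cong2pi (delta l C) (PI / INR N * INR s) /\
  cong2pi (beta l C) (- (PI / INR N * t)).

(* Main.v *)
Require Import Defs.
From Stdlib Require Import Reals ZArith Lra Lia Psatz.
Open Scope R_scope.

Lemma cong_refl a : cong2pi a a.
Proof. exists 0%Z. simpl. ring. Qed.

Lemma cong_sym a b : cong2pi a b -> cong2pi b a.
Proof. intros [k Hk]. exists (- k)%Z. rewrite opp_IZR. lra. Qed.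

Lemma cong_trans a b c : cong2pi a b -> cong2pi b c -> cong2pi a c.
Proof. intros [k Hk] [j Hj]. exists (k + j)%Z. rewrite plus_IZR. lra. Qed.

Lemma cong_sub a b a' b' : cong2pi a a' -> cong2pi b b' -> cong2pi (a - b) (a' - b').
Proof. intros [k Hk] [j Hj]. exists (k - j)%Z. rewrite minus_IZR. lra. Qed.

Lemma cong_small a b : cong2pi a b -> - (2 * PI) < a - b < 2 * PI -> a = b.
Proof.
  intros [k Hk] H. pose proof PI_RGT_0.
  destruct (Z_lt_le_dec k 0) as [Hn|Hn].
  - assert (IZR k <= -1) by (apply IZR_le; lia). nra.
  - destruct (Z_le_lt_eq_dec 0 k Hn) as [Hp|Hp].
    + assert (1 <= IZR k) by (apply IZR_le; lia). nra.
    + subst k. simpl in Hk. lra.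
Qed.

Lemma sin0_cong x y : sin ((x - y) / 2) = 0 -> cong2pi x y.
Proof.
  intros H. destruct (sin_eq_0_0 _ H) as [k Hk]. exists k. lra.
Qed.

Lemma beta_formula (l g : R) :
  0 < cos (PI/4 - l/2) -> 0 < cos (PI/4 - l/2) + sin (PI/4 - l/2) -> cos g <> 0 ->
  cong2pi (beta l (2 * g))
    (-2 * atan (sin (PI/4 - l/2) * sin g / (cos (PI/4 - l/2) * cos g))).
Proof.
  set (ps := PI/4 - l/2). intros Hc Hcs Hg.
  set (p := sin ps * sin g / (cos ps * cos g)).
  set (ph := atan p).
  assert (Hph : 0 < cos ph) by (apply cos_gt_0; pose proof (atan_bound p); unfold ph; lra).
  assert (Hsph : sin ph = p * cos ph).
  { pose proof (tan_atan p) as Ht. fold ph in Ht. unfold tan in Ht.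
    rewrite <- Ht. field. lra. }
  assert (Hl2 : l / 2 = PI/4 - ps) by (unfold ps; ring).
  set (c := 1 / sqrt 2).
  assert (Hc2 : 0 < c). { unfold c. apply Rdiv_lt_0_compat; [lra| apply sqrt_lt_R0; lra]. }
  assert (Hsl : sin (l/2) = c * cos ps - c * sin ps).
  { rewrite Hl2, sin_minus, sin_PI4, cos_PI4. fold c. ring. }
  assert (Hcl : cos (l/2) = c * cos ps + c * sin ps).
  { rewrite Hl2, cos_minus, sin_PI4, cos_PI4. fold c. ring. }
  assert (Hsg : sin (2 * g) = 2 * sin g * cos g) by (rewrite sin_2a; ring).
  assert (Hcg : cos (2 * g) = cos g * cos g - sin g * sin g) by (rewrite cos_2a; ring).
  assert (H1 : sin g * sin g + cos g * cos g = 1) by (pose proof (sin2_cos2 g); unfold Rsqr in *; lra).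
  assert (Hden : sin (l / 2) + cos (l / 2) * cos (2 * g)
                 = 2 * c * (cos ps * cos g * cos g - sin ps * sin g * sin g)).
  { rewrite Hsl, Hcl, Hcg.
    apply Rminus_diag_uniq.
    transitivity (c * (cos ps - sin ps) * (1 - (sin g * sin g + cos g * cos g))); [ring|].
    rewrite H1. ring. }
  unfold beta. destruct (Req_EM_T _ _) as [E|E].
  - apply sin0_cong.
    replace ((2 * g - PI - -2 * ph) / 2) with ((g + ph) - PI/2) by field.
    rewrite sin_minus, sin_PI2, cos_PI2, cos_plus, Hsph.
    rewrite Hden in E.
    assert (Hz : cos ps * cos g * cos g - sin ps * sin g * sin g = 0) by nra.
    unfold p.
    replace ((cos g * cos ph - sin g * (sin ps * sin g / (cos ps * cos g) * cos ph)))
      with (cos ph / (cos ps * cos g) * (cos ps * cos g * cos g - sin ps * sin g * sin g))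
      by (field; lra).
    rewrite Hz. ring.
  - apply sin0_cong.
    set (r := cos (l / 2) * sin (2 * g) / (sin (l / 2) + cos (l / 2) * cos (2 * g))).
    set (X := atan r).
    assert (HX : 0 < cos X) by (apply cos_gt_0; pose proof (atan_bound r); unfold X; lra).
    assert (HsX : sin X = r * cos X).
    { pose proof (tan_atan r) as Ht. fold X in Ht. unfold tan in Ht.
      rewrite <- Ht. field. lra. }
    replace ((2 * g - 2 * X - -2 * ph) / 2) with ((g + ph) - X) by field.
    rewrite sin_minus, sin_plus, cos_plus, Hsph, HsX.
    assert (Hz : cos ps * cos g * cos g - sin ps * sin g * sin g <> 0).
    { intro Hz. apply E. rewrite Hden, Hz. ring. }
    unfold r, p. rewrite Hden, Hcl, Hsg.
    field. repeat split; lra.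
Qed.


Lemma congr_R a b c : a = b -> cong2pi b c -> cong2pi a c.
Proof. intros ->; auto. Qed.

Lemma core (l C th sg : R) :
  0 <= l < PI/2 -> 0 < C < PI -> 0 < th < sg -> sg < PI/2 ->
  let u := sin (PI/4 - l/2) / cos (PI/4 - l/2) in
  let v := sin (C/2) / cos (C/2) in
  (cong2pi (delta l C) (2 * sg) /\ cong2pi (beta l C) (- (2 * th))) <->
  (atan (u * v) = th /\ atan (u / v) = sg - th).
Proof.
  intros Hl HC Ht Hs u v. pose proof PI_RGT_0 as Hpi.
  assert (Hcp : 0 < cos (PI/4 - l/2)) by (apply cos_gt_0; lra).
  assert (Hsp : 0 < sin (PI/4 - l/2)) by (apply sin_gt_0; lra).
  assert (Hcg : 0 < cos (C/2)) by (apply cos_gt_0; lra).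
  assert (Hsg : 0 < sin (C/2)) by (apply sin_gt_0; lra).
  assert (Hu : 0 < u) by (unfold u; apply Rdiv_lt_0_compat; lra).
  assert (Hv : 0 < v) by (unfold v; apply Rdiv_lt_0_compat; lra).
  assert (Hb : cong2pi (beta l C) (-2 * atan (u * v))).
  { replace C with (2 * (C/2)) at 1 by field.
    replace (u * v) with (sin (PI/4 - l/2) * sin (C/2) / (cos (PI/4 - l/2) * cos (C/2)))
      by (unfold u, v; field; lra).
    apply beta_formula; lra. }
  assert (Hb2 : cong2pi (beta l (C + PI)) (2 * atan (u / v))).
  { replace (C + PI) with (2 * (C/2 + PI/2)) by field.
    replace (2 * atan (u / v)) with
      (-2 * atan (sin (PI/4 - l/2) * sin (C/2 + PI/2) / (cos (PI/4 - l/2) * cos (C/2 + PI/2)))).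
    - apply beta_formula; try lra.
      rewrite cos_plus, sin_PI2, cos_PI2. lra.
    - rewrite cos_plus, sin_plus, sin_PI2, cos_PI2.
      replace (sin (PI / 4 - l / 2) * (sin (C / 2) * 0 + cos (C / 2) * 1) /
               (cos (PI / 4 - l / 2) * (cos (C / 2) * 0 - sin (C / 2) * 1)))
        with (- (u / v)) by (unfold u, v; field; lra).
      rewrite atan_opp. ring. }
  assert (Hd : cong2pi (delta l C) (2 * atan (u / v) + 2 * atan (u * v))).
  { unfold delta. replace (2 * atan (u / v) + 2 * atan (u * v))
      with (2 * atan (u / v) - (-2 * atan (u * v))) by ring.
    apply cong_sub; auto. }
  pose proof (atan_bound (u*v)). pose proof (atan_bound (u/v)).
  split.
  - intros [H1 H2].
    assert (E1 : -2 * atan (u * v) = - (2 * th)).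
    { apply cong_small. apply cong_trans with (beta l C). apply cong_sym; auto. auto. lra. }
    split; [lra|].
    assert (E2 : 2 * atan (u / v) + 2 * atan (u * v) = 2 * sg).
    { apply cong_small. apply cong_trans with (delta l C). apply cong_sym; auto. auto. lra. }
    lra.
  - intros [H1 H2]. split.
    + apply cong_trans with (2 * atan (u / v) + 2 * atan (u * v)); auto.
      rewrite H1, H2. apply congr_R with (2 * sg); [ring | apply cong_refl].
    + apply cong_trans with (-2 * atan (u * v)); auto.
      rewrite H1. apply congr_R with (- (2 * th)); [ring | apply cong_refl].
Qed.


Lemma div_le a b c d : 0 < b -> 0 < d -> a * d <= c * b -> a / b <= c / d.
Proof.
  intros Hb Hd H.
  replace (a / b) with ((a * d) * / (b * d)) by (field; lra).
  replace (c / d) with ((c * b) * / (b * d)) by (field; lra).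
  apply Rmult_le_compat_r; [|auto].
  left. apply Rinv_0_lt_compat. nra.
Qed.

Lemma sq_inj x y : 0 <= x -> 0 <= y -> x * x = y * y -> x = y.
Proof. intros. nra. Qed.

Lemma tan_prod_le x y : 0 < x -> 0 < y -> x + y < PI/2 ->
  tan x * tan y <= tan ((x + y)/2) * tan ((x + y)/2).
Proof.
  intros Hx Hy Hxy. pose proof PI_RGT_0.
  set (h := (x + y)/2).
  assert (Hcx : 0 < cos x) by (apply cos_gt_0; lra).
  assert (Hcy : 0 < cos y) by (apply cos_gt_0; lra).
  assert (Hch : 0 < cos h) by (apply cos_gt_0; unfold h; lra).
  assert (Hsx : 0 < sin x) by (apply sin_gt_0; lra).
  assert (Hsy : 0 < sin y) by (apply sin_gt_0; lra).
  assert (Hcs : 0 < cos (x + y)) by (apply cos_gt_0; lra).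
  assert (E1 : cos (x + y) = cos x * cos y - sin x * sin y) by apply cos_plus.
  assert (E2 : cos (x - y) = cos x * cos y + sin x * sin y) by apply cos_minus.
  assert (E3 : cos (x + y) = 1 - 2 * sin h * sin h).
  { replace (x + y) with (2 * h) by (unfold h; field). rewrite cos_2a_sin. ring. }
  assert (E4 : cos (x + y) = 2 * cos h * cos h - 1).
  { replace (x + y) with (2 * h) by (unfold h; field). rewrite cos_2a_cos. ring. }
  pose proof (COS_bound (x - y)).
  unfold tan.
  replace (sin x / cos x * (sin y / cos y)) with ((sin x * sin y) / (cos x * cos y)) by (field; lra).
  replace (sin h / cos h * (sin h / cos h)) with ((sin h * sin h) / (cos h * cos h)) by (field; lra).
  apply div_le; nra.
Qed.

Definition c0 (N : nat) := PI / (2 * INR N).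
Definition Tf N t := tan (c0 N * t).
Definition Wf N s t := tan (c0 N * INR s - c0 N * t).
Definition Lf N s t := PI/2 - 2 * atan (sqrt (Tf N t * Wf N s t)).
Definition Cfn N s t := 2 * atan (sqrt (Tf N t / Wf N s t)).

Lemma basics N s : (2 < N)%nat -> (1 <= s)%nat -> (s < N)%nat ->
  0 < c0 N /\ 0 < c0 N * INR s < PI / 2 /\ 0 < INR N /\ 0 < INR s.
Proof.
  intros HN Hs HsN. pose proof PI_RGT_0.
  assert (0 < INR N) by (apply lt_0_INR; lia).
  assert (0 < INR s) by (apply lt_0_INR; lia).
  assert (INR s < INR N) by (apply lt_INR; lia).
  assert (0 < c0 N) by (unfold c0; apply Rdiv_lt_0_compat; lra).
  repeat split; auto.
  - nra.
  - unfold c0. replace (PI / (2 * INR N) * INR s) with (PI / 2 * (INR s / INR N)) by (field; lra).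
    assert (INR s / INR N < 1).
    { apply (Rmult_lt_reg_r (INR N)); auto. field_simplify; lra. }
    nra.
Qed.


Lemma atan_le_mono x y : x <= y -> atan x <= atan y.
Proof. intros [H|H]; [left; apply atan_increasing; auto | subst; lra]. Qed.

Lemma spec_iff N s t l C : (2 < N)%nat -> (1 <= s)%nat -> (s < N)%nat -> 0 < t < INR s ->
  lamC_spec N s t l C <-> (l = Lf N s t /\ C = Cfn N s t).
Proof.
  intros HN Hs1 HsN Ht. pose proof PI_RGT_0.
  destruct (basics N s HN Hs1 HsN) as [Hc0 [[Hs0 HsP] [HN0 Hs]]].
  unfold lamC_spec, Lf, Cfn, Tf, Wf.
  set (sg := c0 N * INR s) in *. set (th := c0 N * t) in *.
  assert (Hth : 0 < th < sg) by (unfold th, sg; split; nra).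
  replace (PI / (2 * INR N) * INR s) with sg by reflexivity.
  replace (PI / INR N * INR s) with (2 * sg) by (unfold sg, c0; field; lra).
  replace (PI / INR N * t) with (2 * th) by (unfold th, c0; field; lra).
  assert (HT : 0 < tan th) by (apply tan_gt_0; lra).
  assert (HW : 0 < tan (sg - th)) by (apply tan_gt_0; lra).
  set (T := tan th) in *. set (W := tan (sg - th)) in *.
  split.
  - intros [[Hl1 Hl2] [HC [Hd Hb]]].
    assert (Hl : 0 <= l < PI/2) by lra.
    pose proof (proj1 (core l C th sg Hl HC Hth HsP) (conj Hd Hb)) as [E1 E2].
    set (u := sin (PI / 4 - l / 2) / cos (PI / 4 - l / 2)) in *.
    set (v := sin (C / 2) / cos (C / 2)) in *.
    assert (Hcp : 0 < cos (PI/4 - l/2)) by (apply cos_gt_0; lra).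
    assert (Hsp : 0 < sin (PI/4 - l/2)) by (apply sin_gt_0; lra).
    assert (Hcg : 0 < cos (C/2)) by (apply cos_gt_0; lra).
    assert (Hsg : 0 < sin (C/2)) by (apply sin_gt_0; lra).
    assert (Hu : 0 < u) by (unfold u; apply Rdiv_lt_0_compat; lra).
    assert (Hv : 0 < v) by (unfold v; apply Rdiv_lt_0_compat; lra).
    assert (F1 : u * v = T) by (unfold T; rewrite <- E1; rewrite tan_atan; auto).
    assert (F2 : u / v = W) by (unfold W; rewrite <- E2; rewrite tan_atan; auto).
    assert (Su : sqrt (T * W) = u).
    { apply sqrt_lem_1; try nra. rewrite <- F1, <- F2. field. lra. }
    assert (Sv : sqrt (T / W) = v).
    { apply sqrt_lem_1; try lra.
      - left. apply Rdiv_lt_0_compat; lra.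
      - rewrite <- F1, <- F2. field. lra. }
    rewrite Su, Sv. unfold u, v. fold (tan (PI / 4 - l / 2)). fold (tan (C/2)).
    rewrite !atan_tan by lra. split; field.
  - intros [El EC].
    set (a := sqrt (T * W)) in *. set (b := sqrt (T / W)) in *.
    assert (Ha : 0 < a) by (apply sqrt_lt_R0; nra).
    assert (Hb : 0 < b) by (apply sqrt_lt_R0; apply Rdiv_lt_0_compat; lra).
    assert (Haa : a * a = T * W) by (apply sqrt_sqrt; nra).
    assert (Hbb : b * b = T / W) by (apply sqrt_sqrt; left; apply Rdiv_lt_0_compat; lra).
    pose proof (atan_bound a). pose proof (atan_bound b).
    assert (Ha0 : 0 < atan a) by (rewrite <- atan_0; apply atan_increasing; auto).
    assert (Hb0 : 0 < atan b) by (rewrite <- atan_0; apply atan_increasing; auto).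
    assert (Hm : 0 < tan (sg / 2)) by (apply tan_gt_0; lra).
    assert (Hle : T * W <= tan (sg/2) * tan (sg/2)).
    { unfold T, W. replace (sg / 2) with ((th + (sg - th)) / 2) by field.
      apply tan_prod_le; lra. }
    assert (Ham : a <= tan (sg / 2)) by nra.
    assert (Hatm : atan a <= sg / 2).
    { rewrite <- (atan_tan (sg/2)) by lra. apply atan_le_mono; auto. }
    assert (Hl : 0 <= l < PI/2) by lra.
    assert (HC : 0 < C < PI) by lra.
    split; [lra|]. split; [lra|].
    apply (proj2 (core l C th sg Hl HC Hth HsP)).
    assert (Pu : PI / 4 - l / 2 = atan a) by (rewrite El; field).
    assert (Pv : C / 2 = atan b) by (rewrite EC; field).
    rewrite Pu, Pv. fold (tan (atan a)). fold (tan (atan b)). rewrite !tan_atan.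
    assert (Hab : a * b = T).
    { apply sq_inj; try nra. replace (a * b * (a * b)) with ((a * a) * (b * b)) by ring.
      rewrite Haa, Hbb. field. lra. }
    assert (Hab2 : a / b = W).
    { apply sq_inj; try lra. left; apply Rdiv_lt_0_compat; lra.
      replace (a / b * (a / b)) with ((a * a) / (b * b)) by (field; lra).
      rewrite Haa, Hbb. field. lra. }
    rewrite Hab, Hab2. unfold T, W. rewrite !atan_tan by lra. auto.
Qed.


Section S.
Variables (N s : nat).
Hypotheses (HN : (2 < N)%nat) (Hs1 : (1 <= s)%nat) (HsN : (s < N)%nat).

Lemma div_eq_cross a b c d : b <> 0 -> d <> 0 -> a / b = c / d -> a * d = c * b.
Proof.
  intros Hb Hd H. transitivity ((a / b) * (b * d)); [field; auto|].
  rewrite H. field; auto.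
Qed.

Lemma Lf_sym t : Lf N s (INR s - t) = Lf N s t.
Proof.
  unfold Lf, Tf, Wf.
  replace (c0 N * (INR s - t)) with (c0 N * INR s - c0 N * t) by ring.
  replace (c0 N * INR s - (c0 N * INR s - c0 N * t)) with (c0 N * t) by ring.
  rewrite (Rmult_comm (tan (c0 N * INR s - c0 N * t))). reflexivity.
Qed.

Lemma TW_pos t : 0 < t < INR s -> 0 < Tf N t /\ 0 < Wf N s t /\ Tf N t < tan (c0 N * INR s).
Proof.
  intros Ht. pose proof PI_RGT_0.
  destruct (basics N s HN Hs1 HsN) as [Hc0 [[Hs0 HsP] [HN0 Hs]]].
  unfold Tf, Wf.
  assert (0 < c0 N * t < c0 N * INR s) by (split; nra).
  split; [apply tan_gt_0; lra|]. split; [apply tan_gt_0; lra|].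
  apply tan_increasing; lra.
Qed.

Lemma Cfn_sym t : 0 < t < INR s -> Cfn N s (INR s - t) = PI - Cfn N s t.
Proof.
  intros Ht. destruct (TW_pos t Ht) as [HT [HW _]].
  unfold Cfn. unfold Tf at 1. unfold Wf at 1.
  replace (c0 N * (INR s - t)) with (c0 N * INR s - c0 N * t) by ring.
  replace (c0 N * INR s - (c0 N * INR s - c0 N * t)) with (c0 N * t) by ring.
  fold (Tf N t). fold (Wf N s t).
  replace (Wf N s t / Tf N t) with (/ (Tf N t / Wf N s t)) by (field; lra).
  rewrite sqrt_inv. rewrite atan_inv. field.
  apply sqrt_lt_R0. apply Rdiv_lt_0_compat; lra.
Qed.

Lemma W_formula t : 0 < t < INR s ->
  Wf N s t = (tan (c0 N * INR s) - Tf N t) / (1 + tan (c0 N * INR s) * Tf N t).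
Proof.
  intros Ht. pose proof PI_RGT_0.
  destruct (basics N s HN Hs1 HsN) as [Hc0 [[Hs0 HsP] [HN0 Hs]]].
  destruct (TW_pos t Ht) as [HT [HW Hk]].
  assert (0 < c0 N * t < c0 N * INR s) by (split; nra).
  unfold Wf, Tf. apply tan_minus.
  - apply Rgt_not_eq, cos_gt_0; lra.
  - apply Rgt_not_eq, cos_gt_0; lra.
  - apply Rgt_not_eq, cos_gt_0; lra.
  - unfold Tf in *. nra.
Qed.

Lemma th_inj t1 t2 : 0 < t1 < INR s -> 0 < t2 < INR s -> Tf N t1 = Tf N t2 -> t1 = t2.
Proof.
  intros H1 H2 E. pose proof PI_RGT_0.
  destruct (basics N s HN Hs1 HsN) as [Hc0 [[Hs0 HsP] [HN0 Hs]]].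
  unfold Tf in E.
  assert (0 < c0 N * t1 < c0 N * INR s) by (split; nra).
  assert (0 < c0 N * t2 < c0 N * INR s) by (split; nra).
  apply (f_equal atan) in E. rewrite !atan_tan in E by lra.
  apply Rmult_eq_reg_l in E; lra.
Qed.

Lemma th_inj2 t1 t2 : 0 < t1 < INR s -> 0 < t2 < INR s -> Tf N t2 = Wf N s t1 -> t2 = INR s - t1.
Proof.
  intros H1 H2 E. pose proof PI_RGT_0.
  destruct (basics N s HN Hs1 HsN) as [Hc0 [[Hs0 HsP] [HN0 Hs]]].
  unfold Tf, Wf in E.
  assert (0 < c0 N * t1 < c0 N * INR s) by (split; nra).
  assert (0 < c0 N * t2 < c0 N * INR s) by (split; nra).
  apply (f_equal atan) in E. rewrite !atan_tan in E by lra.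
  replace (c0 N * INR s - c0 N * t1) with (c0 N * (INR s - t1)) in E by ring.
  apply Rmult_eq_reg_l in E; lra.
Qed.

Lemma atan_inj x y : atan x = atan y -> x = y.
Proof. intros E. rewrite <- (tan_atan x), <- (tan_atan y), E. auto. Qed.

Lemma sqrt_inj' x y : 0 <= x -> 0 <= y -> sqrt x = sqrt y -> x = y.
Proof. intros Hx Hy E. rewrite <- (sqrt_sqrt x), <- (sqrt_sqrt y), E; auto. Qed.

Lemma Lf_eq t1 t2 : 0 < t1 < INR s -> 0 < t2 < INR s ->
  (Lf N s t1 = Lf N s t2 <-> (t2 = t1 \/ t2 = INR s - t1)).
Proof.
  intros H1 H2. split.
  - intros E. unfold Lf in E.
    destruct (TW_pos t1 H1) as [HT1 [HW1 Hk1]].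
    destruct (TW_pos t2 H2) as [HT2 [HW2 Hk2]].
    assert (E2 : Tf N t1 * Wf N s t1 = Tf N t2 * Wf N s t2).
    { apply sqrt_inj'; try nra. apply atan_inj. lra. }
    rewrite (W_formula t1 H1), (W_formula t2 H2) in E2.
    set (k := tan (c0 N * INR s)) in *.
    set (T1 := Tf N t1) in *. set (T2 := Tf N t2) in *.
    assert (Hk : 0 < k) by lra.
    assert (E3 : T1 * (k - T1) * (1 + k * T2) = T2 * (k - T2) * (1 + k * T1)).
    { apply div_eq_cross; try nra. }
    assert (E4 : (T1 - T2) * (k - T1 - T2 - k * T1 * T2) = 0).
    { replace ((T1 - T2) * (k - T1 - T2 - k * T1 * T2)) with
        (T1 * (k - T1) * (1 + k * T2) - T2 * (k - T2) * (1 + k * T1)) by ring.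
      lra. }
    destruct (Rmult_integral _ _ E4) as [E5|E5].
    + left. symmetry. apply th_inj; auto. unfold T1, T2 in *. lra.
    + right. apply th_inj2; auto. fold T2. rewrite (W_formula t1 H1). fold k T1.
      field_simplify_eq; nra.
  - intros [E|E]; subst; auto. symmetry; apply Lf_sym.
Qed.

Lemma Cfn_inj t1 t2 : 0 < t1 < INR s -> 0 < t2 < INR s -> Cfn N s t1 = Cfn N s t2 -> t1 = t2.
Proof.
  intros H1 H2 E. unfold Cfn in E.
  destruct (TW_pos t1 H1) as [HT1 [HW1 Hk1]].
  destruct (TW_pos t2 H2) as [HT2 [HW2 Hk2]].
  assert (E2 : Tf N t1 / Wf N s t1 = Tf N t2 / Wf N s t2).
  { apply sqrt_inj'; try (left; apply Rdiv_lt_0_compat; lra). apply atan_inj. lra. }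
  rewrite (W_formula t1 H1), (W_formula t2 H2) in E2.
  set (k := tan (c0 N * INR s)) in *.
  set (T1 := Tf N t1) in *. set (T2 := Tf N t2) in *.
  assert (Hk : 0 < k) by lra.
  assert (E3 : T1 * (1 + k * T1) * (k - T2) = T2 * (1 + k * T2) * (k - T1)).
  { apply div_eq_cross; try lra.
    replace (T1 * (1 + k * T1) / (k - T1)) with (T1 / ((k - T1) / (1 + k * T1))) by (field; nra).
    replace (T2 * (1 + k * T2) / (k - T2)) with (T2 / ((k - T2) / (1 + k * T2))) by (field; nra).
    auto. }
  assert (E4 : k * (T1 - T2) * (1 + k * (T1 + T2) - T1 * T2) = 0).
  { replace (k * (T1 - T2) * (1 + k * (T1 + T2) - T1 * T2)) with
      (T1 * (1 + k * T1) * (k - T2) - T2 * (1 + k * T2) * (k - T1)) by ring.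
    lra. }
  assert (Hpos : 0 < 1 + k * (T1 + T2) - T1 * T2) by nra.
  apply th_inj; auto. fold T1 T2.
  destruct (Rmult_integral _ _ E4) as [E5|E5]; [|lra].
  destruct (Rmult_integral _ _ E5); lra.
Qed.

Lemma Cfn_surj c : 0 < c < PI -> exists t, 0 < t < INR s /\ Cfn N s t = c.
Proof.
  intros Hc. pose proof PI_RGT_0.
  destruct (basics N s HN Hs1 HsN) as [Hc0 [[Hs0 HsP] [HN0 Hs]]].
  set (k := tan (c0 N * INR s)).
  assert (Hk : 0 < k) by (apply tan_gt_0; lra).
  set (v := tan (c / 2)).
  assert (Hv : 0 < v) by (apply tan_gt_0; lra).
  set (bb := 1 + v * v).
  set (D := bb * bb + 4 * k * k * v * v).
  set (r := sqrt D).
  assert (Hr : r * r = D) by (apply sqrt_sqrt; unfold D, bb; nra).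
  assert (Hr0 : 0 <= r) by apply sqrt_pos.
  assert (Hbb : 0 < bb) by (unfold bb; nra).
  assert (HkV : 0 < k * k * v * v). { apply Rmult_lt_0_compat; [apply Rmult_lt_0_compat; [apply Rmult_lt_0_compat|]|]; lra. }
  assert (HD1 : bb * bb < D) by (unfold D; nra).
  assert (HD2 : D < (2 * k * k + bb) * (2 * k * k + bb)) by (unfold D, bb; nra).
  assert (Hrb : bb < r).
  { destruct (Rlt_or_le bb r) as [|Hle]; auto.
    assert (r * r <= bb * bb) by (apply Rmult_le_compat; lra). lra. }
  assert (Hrk : r < 2 * k * k + bb).
  { destruct (Rlt_or_le r (2 * k * k + bb)) as [|Hle]; auto.
    assert ((2 * k * k + bb) * (2 * k * k + bb) <= r * r) by (apply Rmult_le_compat; nra). lra. }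
  set (T0 := (- bb + r) / (2 * k)).
  assert (HT0 : 0 < T0) by (unfold T0; apply Rdiv_lt_0_compat; lra).
  assert (HT0k : T0 < k).
  { unfold T0. apply (Rmult_lt_reg_r (2 * k)); [lra|]. field_simplify; nra. }
  assert (Hq : k * T0 * T0 + bb * T0 - v * v * k = 0).
  { assert (4 * k * (k * T0 * T0 + bb * T0 - v * v * k) = r * r - D).
    { unfold T0, D. field. lra. }
    nra. }
  set (th := atan T0).
  assert (Hth0 : 0 < th) by (unfold th; rewrite <- atan_0; apply atan_increasing; auto).
  assert (Hths : th < c0 N * INR s).
  { unfold th. rewrite <- (atan_tan (c0 N * INR s)) by lra. apply atan_increasing; auto. }
  exists (th / c0 N).
  assert (Ht : 0 < th / c0 N < INR s).
  { split. apply Rdiv_lt_0_compat; lra.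
    apply (Rmult_lt_reg_l (c0 N)); auto. field_simplify; lra. }
  split; auto.
  assert (ET : Tf N (th / c0 N) = T0).
  { unfold Tf. replace (c0 N * (th / c0 N)) with th by (field; lra). unfold th. apply tan_atan. }
  unfold Cfn. rewrite (W_formula _ Ht). rewrite ET. fold k.
  replace (T0 / ((k - T0) / (1 + k * T0))) with (v * v).
  - rewrite sqrt_square by lra. unfold v. rewrite atan_tan by lra. field.
  - unfold bb in Hq. field_simplify_eq; try nra.
Qed.

Lemma half_val : Lf N s (INR s / 2) = PI / 2 - PI / (2 * INR N) * INR s /\ Cfn N s (INR s / 2) = PI / 2.
Proof.
  pose proof PI_RGT_0.
  destruct (basics N s HN Hs1 HsN) as [Hc0 [[Hs0 HsP] [HN0 Hs]]].
  change (PI / (2 * INR N)) with (c0 N).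
  unfold Lf, Cfn, Tf, Wf.
  replace (c0 N * (INR s / 2)) with (c0 N * INR s / 2) by field.
  replace (c0 N * INR s - c0 N * INR s / 2) with (c0 N * INR s / 2) by field.
  assert (Hm : 0 < tan (c0 N * INR s / 2)) by (apply tan_gt_0; lra).
  rewrite sqrt_square by lra. rewrite atan_tan by lra.
  replace (tan (c0 N * INR s / 2) / tan (c0 N * INR s / 2)) with 1 by (field; lra).
  rewrite sqrt_1, atan_1. split; field.
Qed.

End S.


Theorem lemma24 (N s : nat) (HN : (2 < N)%nat) (Hs1 : (1 <= s)%nat) (HsN : (s < N)%nat) :
  (* existence and uniqueness of λ(s,t), C(s,t) *)
  (forall t : R, 0 < t < INR s ->
     exists l C : R, lamC_spec N s t l C /\
       (forall l' C' : R, lamC_spec N s t l' C' -> l' = l /\ C' = C)) /\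
  (* properties of the functions λ(s,-), C(s,-) *)
  (forall lam Cf : R -> R,
     (forall t : R, 0 < t < INR s -> lamC_spec N s t (lam t) (Cf t)) ->
     (* (i) *)
     (lam (INR s / 2) = PI / 2 - PI / (2 * INR N) * INR s /\ Cf (INR s / 2) = PI / 2) /\
     (* (ii) two-to-one, with λ(s,s-t) = λ(s,t) *)
     (forall t1 t2 : R, 0 < t1 < INR s -> 0 < t2 < INR s ->
        (lam t1 = lam t2 <-> (t2 = t1 \/ t2 = INR s - t1))) /\
     (forall t : R, 0 < t < INR s -> lam (INR s - t) = lam t) /\
     (* (iii) C(s,-) bijective from (0,s) onto (0,π), with C(s,s-t) = π - C(s,t) *)
     (forall t1 t2 : R, 0 < t1 < INR s -> 0 < t2 < INR s -> Cf t1 = Cf t2 -> t1 = t2) /\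
     (forall c : R, 0 < c < PI -> exists t : R, 0 < t < INR s /\ Cf t = c) /\
     (forall t : R, 0 < t < INR s -> Cf (INR s - t) = PI - Cf t)).
Proof.
  destruct (basics N s HN Hs1 HsN) as [Hc0 [[Hs0 HsP] [HN0 Hs]]].
  split.
  - intros t Ht. exists (Lf N s t), (Cfn N s t). split.
    + apply (spec_iff N s t); auto.
    + intros l' C' H. apply (spec_iff N s t) in H; auto.
  - intros lam Cf Hspec.
    assert (HE : forall t, 0 < t < INR s -> lam t = Lf N s t /\ Cf t = Cfn N s t).
    { intros t Ht. apply (spec_iff N s t); auto. }
    assert (Hsym : forall t, 0 < t < INR s -> 0 < INR s - t < INR s) by (intros; lra).
    split; [|split; [|split; [|split; [|split]]]].
    + assert (Hh : 0 < INR s / 2 < INR s) by lra.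
      destruct (HE _ Hh) as [-> ->]. apply half_val; auto.
    + intros t1 t2 H1 H2.
      destruct (HE _ H1) as [-> _]. destruct (HE _ H2) as [-> _].
      apply Lf_eq; auto.
    + intros t Ht. destruct (HE _ Ht) as [-> _]. destruct (HE _ (Hsym t Ht)) as [-> _].
      apply Lf_sym.
    + intros t1 t2 H1 H2.
      destruct (HE _ H1) as [_ ->]. destruct (HE _ H2) as [_ ->].
      apply Cfn_inj; auto.
    + intros c Hc. destruct (Cfn_surj N s HN Hs1 HsN c Hc) as [t [Ht Et]].
      exists t. split; auto. destruct (HE _ Ht) as [_ ->]. auto.
    + intros t Ht. destruct (HE _ Ht) as [_ ->]. destruct (HE _ (Hsym t Ht)) as [_ ->].
      apply Cfn_sym; auto.
Qed.
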